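(* Let $(X,+)$ be an abelian group, $(g,\gamma)$ a construction pair on $(X,+)$, and $C=\langle b\rangle$ a cyclic group. The following are equivalent: (i) The formula $$(b^i,x)\cdot(b^j,y)=\Big(b^{i+j},\ g^{-j}(x)+y+\sum_{k\in I(i+j,-j)}g^{-k}(\gamma(x,y))\Big)\qquad(i,j\in\mathbb Z,\ x,y\in X)$$ correctly defines a multiplication on $C\times X$ (i.e., the right-hand side depends only on the elements $b^i,b^j\in C$ and not on the chosen exponents $i,j$). (ii) Either $C$ is infinite, or $C$ is finite, the order $|g|$ of $g$ (as a permutation) divides $|C|$, and $\sum_{0\le k<|C|}g^k(x)\in\mathrm{Rad}(\gamma)$ for every $x\in X$. (iii) Either $C$ is infinite, or $C$ is finite, $|g|$ divides $|C|$, and $r(g,\gamma)$ divides $|C|$.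
   Context: Let $(X,+)$ be an abelian group. A map $\gamma:X\times X\to X$ is symmetric if $\gamma(x,y)=\gamma(y,x)$, alternating if $\gamma(x,x)=0$, biadditive if additive in each argument. Its radical is $\mathrm{Rad}(\gamma)=\{x\in X:\gamma(x,y)=0\text{ for all }y\in X\}$. A construction pair on $(X,+)$ is a pair $(g,\gamma)$ where $g$ is a permutation of $X$ and $\gamma:X\times X\to X$ is symmetric, alternating and biadditive, such that for all $x,y,z\in X$: (C1) $g^{-1}(g(x)+g(y))=x+y+\gamma(x,y)+g^{-1}(\gamma(x,y))+g^{-2}(\gamma(x,y))$; (C2) $\gamma(\gamma(x,y),z)=0$; (C3) $g^{-1}(\gamma(x,y))=\gamma(g(x),y)$. For integers $i,j$ the interval $I(i,j)\subseteq\mathbb Z$ is $\emptyset$ if $i=j$, $\{i,i+1,\dots,j-1\}$ if $i<j$, and $\{j,j+1,\dots,i-1\}$ if $j<i$. For a construction pair $(g,\gamma)$, $r(g,\gamma)$ is the least positive integer $r$ such that $\sum_{0\le k<r}g^k(x)\in\mathrm{Rad}(\gamma)$ for every $x\in X$, and $r(g,\gamma)=\infty$ if no such $r$ exists. *)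

(* Defs.v *)
From mathcomp Require Import all_boot all_order all_algebra.
Set Implicit Arguments. Unset Strict Implicit. Unset Printing Implicit Defensive.
Import Order.TTheory GRing.Theory Num.Theory.
Local Open Scope ring_scope.

Section Defs.
Variable X : zmodType.

Definition is_perm_pair (g gi : X -> X) : Prop := cancel g gi /\ cancel gi g.

Definition gpow (g gi : X -> X) (k : int) : X -> X :=
  match k with
  | Posz m => iter m g
  | Negz m => iter m.+1 gi
  end.

Definition Rad (gamma : X -> X -> X) (x : X) : Prop :=
  forall y, gamma x y = 0.

Definition construction_pair (g gi : X -> X) (gamma : X -> X -> X) : Prop :=
  is_perm_pair g gi /\
  [/\ (forall x y, gamma x y = gamma y x),
      (forall x, gamma x x = 0),
      (forall x x' y, gamma (x + x') y = gamma x y + gamma x' y),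
      (forall x y y', gamma x (y + y') = gamma x y + gamma x y') &
  [/\
      (* (C1) *)
      (forall x y, gi (g x + g y) =
          x + y + gamma x y + gi (gamma x y) + gi (gi (gamma x y))),
      (* (C2) *)
      (forall x y z, gamma (gamma x y) z = 0) &
      (* (C3) *)
      (forall x y, gi (gamma x y) = gamma (g x) y)]].

Definition perm_order_is (g : X -> X) (m : nat) : Prop :=
  (0 < m)%N /\ (forall x, iter m g x = x) /\
  (forall k, (0 < k < m)%N -> ~ (forall x, iter k g x = x)).

Definition r_is (g : X -> X) (gamma : X -> X -> X) (m : nat) : Prop :=
  (0 < m)%N /\ (forall x, Rad gamma (\sum_(k < m) iter k g x)) /\
  (forall k, (0 < k < m)%N -> ~ (forall x, Rad gamma (\sum_(l < k) iter l g x))).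

End Defs.

Definition Iint (i j : int) : seq int :=
  if i <= j then [seq i + (k%:Z) | k <- iota 0 `|j - i|%N]
  else [seq j + (k%:Z) | k <- iota 0 `|i - j|%N].

(* second component of (b^i,x).(b^j,y) *)
Definition mult2 (X : zmodType) (g gi : X -> X) (gamma : X -> X -> X)
  (i j : int) (x y : X) : X :=
  gpow g gi (- j) x + y + \sum_(k <- Iint (i + j) (- j)) gpow g gi (- k) (gamma x y).

(* Main.v *)
Require Import Defs.
From mathcomp Require Import all_boot all_order all_algebra.
From mathcomp Require Import zify.
From Stdlib Require Import ClassicalEpsilon.
Import Order.TTheory GRing.Theory Num.Theory.
Local Open Scope ring_scope.

Definition pb (Q : Prop) : bool :=
  if excluded_middle_informative Q then true else false.
Lemma pbP Q : reflect Q (pb Q).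
Proof. rewrite /pb; case: excluded_middle_informative => q; by constructor. Qed.

Lemma min_div (P : nat -> Prop) (n : nat) :
  P 0%N ->
  (forall s t, P s -> P t -> P (s + t)%N) ->
  (forall s t, P s -> P (s + t)%N -> P t) ->
  (0 < n)%N ->
  (P n <-> exists m, ((0 < m)%N /\ P m /\ (forall k, (0 < k < m)%N -> ~ P k))
                     /\ (m %| n)%N).
Proof.
move=> P0 Padd Psub n0.
have Pmul : forall m q, P m -> P (q * m)%N.
  move=> m; elim=> [|q IH] Pm; first by rewrite mul0n.
  by rewrite mulSn; apply: Padd => //; apply: IH.
split.
- move=> Pn.
  have ex : exists k, (0 < k)%N && pb (P k) by exists n; rewrite n0; apply/pbP.
  case: (ex_minnP ex) => m /andP [m0 /pbP Pm] mmin.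
  exists m; split.
    split=> //; split=> // k /andP [k0 km] Pk.
    have := mmin k; rewrite k0 /=.
    move=> /(_ (introT (pbP _) Pk)); by rewrite leqNgt km.
  have Pr : P (n %% m)%N.
    apply: (Psub (n %/ m * m)%N); first exact: Pmul.
    by rewrite -divn_eq.
  case E: (n %% m)%N => [|r]; first by rewrite /dvdn E.
  have := mmin r.+1; rewrite /= -E.
  move=> /(_ (introT (pbP _) Pr)); by rewrite leqNgt ltn_pmod.
- move=> [m [[m0 [Pm _]] mn]].
  by rewrite -(divnK mn); apply: Pmul.
Qed.
Section S.
Lemma gamma0l (X : zmodType) (gamma : X -> X -> X) :
  (forall x x' y, gamma (x + x') y = gamma x y + gamma x' y) ->
  forall y, gamma 0 y = 0.
Proof. move=> gl y; apply/(addIr (gamma 0 y)); by rewrite -gl !add0r. Qed.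
Lemma gammaNl (X : zmodType) (gamma : X -> X -> X) :
  (forall x x' y, gamma (x + x') y = gamma x y + gamma x' y) ->
  forall x y, gamma (- x) y = - gamma x y.
Proof. move=> gl x y; apply/(addIr (gamma x y)); rewrite -gl !addNr; exact: gamma0l. Qed.
Lemma gamma0r (X : zmodType) (gamma : X -> X -> X) :
  (forall x y y', gamma x (y + y') = gamma x y + gamma x y') ->
  forall x, gamma x 0 = 0.
Proof. move=> gr x; apply/(addIr (gamma x 0)); by rewrite -gr !add0r. Qed.
Lemma gamma_suml (X : zmodType) (gamma : X -> X -> X) n (F : 'I_n -> X) y :
  (forall x x' y, gamma (x + x') y = gamma x y + gamma x' y) ->
  gamma (\sum_(i < n) F i) y = \sum_(i < n) gamma (F i) y.
Proof.
move=> gl; elim/big_rec2: _ => [|i a b _ <-]; first exact: gamma0l.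
by rewrite gl.
Qed.
Lemma gamma2 (X : zmodType) (gamma : X -> X -> X) :
  (forall x y, gamma x y = gamma y x) -> (forall x, gamma x x = 0) ->
  (forall x x' y, gamma (x + x') y = gamma x y + gamma x' y) ->
  (forall x y y', gamma x (y + y') = gamma x y + gamma x y') ->
  forall x y, gamma x y + gamma x y = 0.
Proof.
move=> gs ga gl gr x y.
have := ga (x + y); rewrite gl !gr !ga add0r addr0 [gamma y x]gs //.
Qed.
End S.

Lemma iter_cancel (X : Type) (g gi : X -> X) n : cancel g gi -> cancel (iter n g) (iter n gi).
Proof. move=> K; elim: n => [|n IH] z //; by rewrite iterSr iterS K IH. Qed.

Lemma gpowS (X : zmodType) (g gi : X -> X) : is_perm_pair g gi ->
  forall a x, gpow g gi (a + 1) x = g (gpow g gi a x).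
Proof.
move=> [K K'] [m|[|m]] x.
- have -> : Posz m + 1 = Posz m.+1 by lia.
  by [].
- have -> : Negz 0 + 1 = 0 by [].
  by rewrite /= K'.
- have -> : Negz m.+1 + 1 = Negz m by rewrite !NegzE; lia.
  by rewrite /= K'.
Qed.

Lemma gpowP (X : zmodType) (g gi : X -> X) : is_perm_pair g gi ->
  forall a x, gpow g gi (a - 1) x = gi (gpow g gi a x).
Proof.
move=> P a x; have [K K'] := P.
by rewrite -{2}(subrK 1 a) gpowS // K.
Qed.

Lemma gpowD (X : zmodType) (g gi : X -> X) : is_perm_pair g gi ->
  forall a (m : nat) x, gpow g gi (a + m%:Z) x = iter m g (gpow g gi a x).
Proof.
move=> P a m x; elim: m => [|m IH]; first by rewrite addr0.
have -> : a + m.+1%:Z = (a + m%:Z) + 1 by lia.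
by rewrite gpowS // IH.
Qed.

Lemma gpowB (X : zmodType) (g gi : X -> X) : is_perm_pair g gi ->
  forall a (m : nat) x, gpow g gi (a - m%:Z) x = iter m gi (gpow g gi a x).
Proof.
move=> P a m x; elim: m => [|m IH]; first by rewrite subr0.
have -> : a - m.+1%:Z = (a - m%:Z) - 1 by lia.
by rewrite gpowP // IH.
Qed.

Lemma gpowN (X : zmodType) (g gi : X -> X) (m : nat) x :
  gpow g gi (- m%:Z) x = iter m gi x.
Proof. by case: m => [|m] //; rewrite -NegzE. Qed.

Lemma gpow_gamma (X : zmodType) (g gi : X -> X) (gamma : X -> X -> X) :
  construction_pair g gi gamma ->
  forall a x y, gpow g gi (- a) (gamma x y) = gamma (gpow g gi a x) y.
Proof.
move=> [[K K'] [gs ga gl gr [c1 c2 c3]]].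
have gg : forall a b, g (gamma a b) = gamma (gi a) b.
  by move=> a b; rewrite -{1}(K' a) -c3 K'.
case=> m x y.
- rewrite gpowN /=; elim: m => [|m IH] //; by rewrite /= IH c3.
- have -> : - Negz m = Posz m.+1 by rewrite NegzE opprK.
  have H : forall k, iter k g (gamma x y) = gamma (iter k gi x) y.
    by elim=> [|k IHk] //=; rewrite IHk gg.
  exact: H.
Qed.
Definition Tsum (X : zmodType) (h : int -> X) (a : int) (l : nat) : X :=
  \sum_(t < l) h (a + t%:Z).
Definition Ssum (X : zmodType) (h : int -> X) (a b : int) : X :=
  \sum_(k <- Iint a b) h k.

Arguments Tsum {X}.
Arguments Ssum {X}.

Lemma Iint_sym a b : Iint a b = Iint b a.
Proof.
rewrite /Iint; case: (ltgtP a b) => [ab|ab|->] //;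
  by rewrite (ltW ab) leNgt ab /= -abszN opprB.
Qed.

Lemma Ssum_sym (X : zmodType) (h : int -> X) a b : Ssum h a b = Ssum h b a.
Proof. by rewrite /Ssum Iint_sym. Qed.

Lemma Ssum_up (X : zmodType) (h : int -> X) a (l : nat) :
  Ssum h a (a + l%:Z) = Tsum h a l.
Proof.
rewrite /Ssum /Iint lerDl le0z_nat.
have -> : (a + l%:Z - a) = l%:Z by rewrite addrC addKr.
rewrite absz_nat big_map /Tsum -(big_mkord xpredT (fun t => h (a + t%:Z))).
by rewrite /index_iota subn0.
Qed.

Lemma Tsum_split (X : zmodType) (h : int -> X) a l1 l2 :
  Tsum h a (l1 + l2) = Tsum h a l1 + Tsum h (a + l1%:Z) l2.
Proof.
rewrite /Tsum big_split_ord /=; congr (_ + _); apply: eq_bigr => t _.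
by rewrite PoszD addrA.
Qed.

Lemma Ssum_shift (X : zmodType) (h : int -> X) (n : nat) :
  (forall k, h k + h k = 0) -> (forall a, Tsum h a n = 0) ->
  forall a b, Ssum h (a + n%:Z) b = Ssum h a b.
Proof.
move=> h2 hT a b.
have T2 : forall c l, Tsum h c l + Tsum h c l = 0.
  by move=> c l; rewrite /Tsum -big_split /= big1.
have [ba|ab] := lerP b a.
  have [l ->] : exists l : nat, a = b + l%:Z by exists `|a - b|%N; lia.
  rewrite -addrA -PoszD Ssum_sym Ssum_up Tsum_split hT addr0.
  by rewrite Ssum_sym Ssum_up.
have [anb|bna] := lerP (a + n%:Z) b.
  have [l ->] : exists l : nat, b = a + n%:Z + l%:Z by exists (absz (b - (a + n%:Z))%R); lia.
  rewrite Ssum_up -addrA -PoszD Ssum_up Tsum_split hT add0r //.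
have [l [l' [-> En]]] : exists l l' : nat, b = a + l%:Z /\ n = (l + l')%N.
  exists (absz (b - a)%R), (absz (a + n%:Z - b)%R); split; lia.
have := hT a; rewrite En Tsum_split => H.
rewrite Ssum_up PoszD addrA Ssum_sym Ssum_up.
apply/(addrI (Tsum h a l)); by rewrite H T2.
Qed.

Arguments Ssum_sym {X}.
Arguments Ssum_up {X}.
Arguments Tsum_split {X}.
Arguments Ssum_shift {X h n}.

Lemma Fmul (X : Type) (F : int -> X) (n : nat) :
  (forall i, F (i + n%:Z) = F i) ->
  forall i i', (i = i' %[mod n%:Z])%Z -> F i = F i'.
Proof.
move=> HF.
have Hpos : forall (m : nat) i, F (i + m%:Z * n%:Z) = F i.
  elim=> [|m IH] i; first by rewrite mul0r addr0.
  by rewrite -addn1 PoszD mulrDl mul1r addrA HF IH.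
have Hall : forall q i, F (i + q * n%:Z) = F i.
  case=> m i; first exact: Hpos.
  rewrite NegzE mulNr.
  by rewrite -{2}(subrK (m.+1%:Z * n%:Z) i) Hpos.
move=> i i' /eqP; rewrite eqz_mod_dvd => /divzK E.
by rewrite -(Hall ((i - i') %/ n%:Z)%Z i') E addrC subrK.
Qed.

Lemma mult2E (X : zmodType) (g gi : X -> X) (gamma : X -> X -> X) :
  construction_pair g gi gamma -> forall i j x y,
  mult2 g gi gamma i j x y = gpow g gi (-j) x + y +
    Ssum (fun k => gamma (gpow g gi k x) y) (i + j) (-j).
Proof.
move=> cp i j x y; rewrite /mult2 /Ssum; congr (_ + _).
apply: eq_bigr => k _; exact: gpow_gamma.
Qed.

Theorem mainTheorem1 (X : zmodType) (g gi : X -> X) (gamma : X -> X -> X)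
  (n : nat) :
  construction_pair g gi gamma ->
  let wd := forall (i i' j j' : int) (x y : X),
      (i = i' %[mod n%:Z])%Z -> (j = j' %[mod n%:Z])%Z ->
      mult2 g gi gamma i j x y = mult2 g gi gamma i' j' x y in
  let c2 := n = 0%N \/
      [/\ (0 < n)%N, (exists m, perm_order_is g m /\ (m %| n)%N) &
          forall x, Rad gamma (\sum_(k < n) iter k g x)] in
  let c3 := n = 0%N \/
      [/\ (0 < n)%N, (exists m, perm_order_is g m /\ (m %| n)%N) &
          exists r, r_is g gamma r /\ (r %| n)%N] in
  (wd <-> c2) /\ (c2 <-> c3).
Proof.
move=> cp; cbv zeta.
have cp' := cp; move: cp' => [[K K'] [gs ga gl gr [c1 c2 c3]]].
pose Pit := fun t => forall x, iter t g x = x.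
pose Prad := fun t => forall x, Rad gamma (\sum_(k < t) iter k g x).
have Pit0 : Pit 0%N by [].
have Pitadd : forall s t, Pit s -> Pit t -> Pit (s + t)%N.
  by move=> s t Hs Ht x; rewrite iterD Ht Hs.
have Pitsub : forall s t, Pit s -> Pit (s + t)%N -> Pit t.
  by move=> s t Hs Hst x; have := Hst x; rewrite addnC iterD Hs.
have RadD : forall a b, Rad gamma a -> Rad gamma b -> Rad gamma (a + b).
  by move=> a b Ha Hb y; rewrite gl Ha Hb addr0.
have RadB : forall a b, Rad gamma (a + b) -> Rad gamma a -> Rad gamma b.
  by move=> a b Hab Ha y; have := Hab y; rewrite gl Ha add0r.
have sumsplit : forall s t x, \sum_(k < s + t) iter k g x =
    \sum_(k < s) iter k g x + \sum_(k < t) iter k g (iter s g x).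
  move=> s t x; rewrite big_split_ord /=; congr (_ + _).
  by apply: eq_bigr => k _; rewrite addnC iterD.
have Prad0 : Prad 0%N by move=> x y; rewrite big_ord0 gamma0l.
have Pradadd : forall s t, Prad s -> Prad t -> Prad (s + t)%N.
  by move=> s t Hs Ht x; rewrite sumsplit; apply: RadD.
have Pradsub : forall s t, Prad s -> Prad (s + t)%N -> Prad t.
  move=> s t Hs Hst x.
  have e : iter s g (iter s gi x) = x by apply: iter_cancel.
  have := Hst (iter s gi x); rewrite sumsplit e => H.
  exact: RadB H (Hs _).
have RadT : forall a x y, Tsum (fun k => gamma (gpow g gi k x) y) a n =
    gamma (\sum_(t < n) iter t g (gpow g gi a x)) y.
  move=> a x y; rewrite gamma_suml // /Tsum; apply: eq_bigr => t _.
  by rewrite gpowD //.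
have [n0|npos] := posnP n.
  subst n; split; split; try by move=> _; left.
  move=> _ i i' j j' x y; rewrite !modz0 => -> -> //.
have mn : ((- n%:Z) = 0 %[mod n%:Z])%Z.
  by have := modzMDl (-1) 0 n%:Z; rewrite mulN1r addr0.
have mp : (n%:Z = 0 %[mod n%:Z])%Z.
  by have := modzMDl 1 0 n%:Z; rewrite mul1r addr0.
have mult2y0 : forall i j x, mult2 g gi gamma i j x 0 = gpow g gi (-j) x.
  move=> i j x; rewrite mult2E // /Ssum big1 => [|k _]; last exact: gamma0r.
  by rewrite !addr0.
have Ssum00 : forall h : int -> X, Ssum h 0 0 = 0.
  by move=> h; have := Ssum_up h 0 0; rewrite addr0 /Tsum big_ord0.
split; last first.
  split.
    move=> [n0|[_ hm Hrad]]; first by rewrite n0 in npos.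
    right; split => //.
    exact: (proj1 (@min_div Prad n Prad0 Pradadd Pradsub npos) Hrad).
  move=> [n0|[_ hm hr]]; first by rewrite n0 in npos.
    right; split => //.
  exact: (proj2 (@min_div Prad n Prad0 Pradadd Pradsub npos) hr).
split.
  move=> wd.
  have Pitn : Pit n.
    move=> x; have := wd 0 0 0 (- n%:Z) x 0 (erefl _) (esym mn).
    by rewrite !mult2y0 oppr0 opprK /= => <-.
  right; split => //.
    exact: (proj1 (@min_div Pit n Pit0 Pitadd Pitsub npos) Pitn).
  move=> x y; rewrite gamma_suml //.
  have := wd n%:Z 0 0 0 x y mp (erefl _).
  rewrite !mult2E // !oppr0 !addr0 => /addrI.
  rewrite Ssum00 Ssum_sym -[n%:Z]add0r Ssum_up /Tsum => E; rewrite -[RHS]E.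
  by apply: eq_bigr => k _; rewrite add0r.
move=> [n0|[_ hm Hrad]]; first by rewrite n0 in npos.
move=> i i' j j' x y Hi Hj.
have Pitn : Pit n by exact: (proj2 (@min_div Pit n Pit0 Pitadd Pitsub npos) hm).
pose h := fun k => gamma (gpow g gi k x) y.
have h2 : forall k, h k + h k = 0 by move=> k; apply: gamma2.
have hT : forall a, Tsum h a n = 0 by move=> a; rewrite RadT Hrad.
have shift := Ssum_shift h2 hT.
have Fi : forall i j, mult2 g gi gamma (i + n%:Z) j x y = mult2 g gi gamma i j x y.
  by move=> i1 j1; rewrite !mult2E // [i1 + n%:Z + j1]addrAC shift.
have Fj : forall i j, mult2 g gi gamma i (j + n%:Z) x y = mult2 g gi gamma i j x y.
  move=> i1 j1; rewrite !mult2E //; congr (_ + _ + _).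
    rewrite opprD gpowB //.
    by rewrite -{1}(Pitn (gpow g gi (- j1) x)) iter_cancel.
  rewrite opprD addrA shift Ssum_sym [RHS]Ssum_sym.
  by rewrite -(shift (- j1 - n%:Z)) subrK.
rewrite (@Fmul X (fun i => mult2 g gi gamma i j x y) n (fun i => Fi i j) _ _ Hi).
exact: (@Fmul X (fun j => mult2 g gi gamma i' j x y) n (fun j => Fj i' j) _ _ Hj).
Qed.
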